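(* Let $\Gamma=([n],E)$ be a connected simple graph. Then the polytopes $$Q_{\Gamma}=\sum_{\substack{S\subseteq[n]\\ \Gamma|_S\text{ connected}}}\Delta_S\qquad\text{and}\qquad Q^L_{\Gamma}=\sum_{\substack{S\subseteq[n]\\ \Gamma|_S\cong L_{|S|}}}\Delta_S$$ are normally equivalent, i.e. their normal fans coincide.
   Context: $L_r$ is the path graph on $r$ vertices and $\Gamma|_S$ is the induced subgraph on $S$; the sums are Minkowski sums over nonempty subsets $S$. For nonempty $S\subseteq[n]$, $\Delta_S=\mathrm{conv}\{e_s:s\in S\}\subset\mathbb{R}^n$, where $e_s$ are the standard basis vectors. *)

(* Defs.v *)
From HB Require Import structures.
From mathcomp Require Import all_boot all_order all_algebra.
From mathcomp Require Import boolp classical_sets.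
From mathcomp Require Import reals.
Set Implicit Arguments. Unset Strict Implicit. Unset Printing Implicit Defensive.
Import Order.TTheory GRing.Theory Num.Theory.
Local Open Scope classical_set_scope.
Local Open Scope ring_scope.

Definition simple_graph (n : nat) (e : rel 'I_n) : Prop :=
  symmetric e /\ irreflexive e.

Definition induced_rel (n : nat) (e : rel 'I_n) (S : {set 'I_n}) : rel 'I_n :=
  fun x y => [&& e x y, x \in S & y \in S].

Definition induced_connected (n : nat) (e : rel 'I_n) (S : {set 'I_n}) : Prop :=
  S != finset.set0 /\ forall x y, x \in S -> y \in S -> connect (induced_rel e S) x y.

Definition graph_connected (n : nat) (e : rel 'I_n) : Prop :=
  induced_connected e [set: 'I_n].

Definition path_graph_rel (k : nat) : rel 'I_k :=
  fun i j => (i.+1 == j :> nat) || (j.+1 == i :> nat).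

(* Gamma|_S is isomorphic to L_{|S|}: a bijection f : 'I_{|S|} -> S
   (injective with image in S, hence onto S by cardinality) carrying the
   path adjacency exactly to the adjacency of Gamma. *)
Definition induced_is_path (n : nat) (e : rel 'I_n) (S : {set 'I_n}) : Prop :=
  exists f : 'I_#|S| -> 'I_n,
    [/\ injective f, forall i, f i \in S &
        forall i j, e (f i) (f j) = path_graph_rel i j].

Definition minkowski_add (R : realType) (n : nat)
  (A B : set 'rV[R]_n) : set 'rV[R]_n :=
  [set x | exists a b, [/\ A a, B b & x = a + b]].

Definition minkowski_sum (R : realType) (n : nat) (P : pred {set 'I_n})
  (F : {set 'I_n} -> set 'rV[R]_n) : set 'rV[R]_n :=
  \big[@minkowski_add R n/[set 0]]_(S | P S) F S.

Definition simplex (R : realType) (n : nat) (S : {set 'I_n}) : set 'rV[R]_n :=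
  [set x | exists lam : 'I_n -> R,
     [/\ forall s, 0 <= lam s,
         forall s, s \notin S -> lam s = 0,
         \sum_(s in S) lam s = 1 &
         x = \sum_(s in S) lam s *: (delta_mx 0 s : 'rV[R]_n)]].

Definition Q_conn (R : realType) (n : nat) (e : rel 'I_n) : set 'rV[R]_n :=
  minkowski_sum (fun S => `[< induced_connected e S >]) (@simplex R n).

Definition Q_path (R : realType) (n : nat) (e : rel 'I_n) : set 'rV[R]_n :=
  minkowski_sum (fun S => (S != finset.set0) && `[< induced_is_path e S >])
    (@simplex R n).

Definition dotv (R : realType) (n : nat) (w x : 'rV[R]_n) : R :=
  \sum_i w 0 i * x 0 i.

Definition face_of (R : realType) (n : nat) (P : set 'rV[R]_n) (w : 'rV[R]_n)
  : set 'rV[R]_n :=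
  [set x | P x /\ forall y, P y -> dotv w y <= dotv w x].

Definition normal_cone (R : realType) (n : nat) (P F : set 'rV[R]_n)
  : set 'rV[R]_n :=
  [set w | F `<=` face_of P w].

(* the normal fan: the set of normal cones of the nonempty faces of P
   (the nonempty faces of a polytope are exactly the sets face_of P w) *)
Definition normal_fan (R : realType) (n : nat) (P : set 'rV[R]_n)
  : set (set 'rV[R]_n) :=
  [set C | exists w, C = normal_cone P (face_of P w)].

Definition normally_equivalent (R : realType) (n : nat) (P Q : set 'rV[R]_n)
  : Prop := normal_fan P = normal_fan Q.

(* Main.v *)
Require Import Defs.
From HB Require Import structures.
From mathcomp Require Import all_boot all_order all_algebra.
From mathcomp Require Import boolp classical_sets reals.
From mathcomp Require Import zify ring lra.
Set Implicit Arguments. Unset Strict Implicit. Unset Printing Implicit Defensive.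

Section Comb.
Variables (n : nat) (e : rel 'I_n).
Hypothesis (esym : symmetric e) (eirr : irreflexive e).

Definition prel (i j : nat) := (i.+1 == j) || (j.+1 == i).

Definition IP (s : seq 'I_n) := uniq s /\
  forall d i j, i < size s -> j < size s -> e (nth d s i) (nth d s j) = prel i j.

Lemma IP_drop s k : IP s -> IP (drop k s).
Proof.
case=> us H; split; first exact: drop_uniq.
move=> d i j; rewrite size_drop !nth_drop => hi hj.
rewrite H; last 2 first.
- by rewrite -ltn_subRL.
- by rewrite -ltn_subRL.
by rewrite /prel -!addnS !eqn_add2l.
Qed.

Lemma IP_cons x s : IP s -> x \notin s ->
  (forall d k, k < size s -> e x (nth d s k) = (k == 0)) -> IP (x :: s).
Proof.
case=> us H xs Hx; split; first by rewrite /= xs us.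
move=> d [|i] [|j] /= hi hj.
- by rewrite eirr.
- by rewrite Hx //; case: j hj.
- by rewrite esym Hx //; case: i hi.
by rewrite H // /prel !eqSS.
Qed.

Lemma last_drop_ne (a : 'I_n) s k : k < size s -> last a (drop k s) = last a s.
Proof.
move=> ks; rewrite -{2}(cat_take_drop k s) last_cat.
by rewrite (drop_nth a ks).
Qed.

Lemma walk_IP (S : {set 'I_n}) x p : x \in S -> path (induced_rel e S) x p ->
  exists t, [/\ IP (x :: t), last x t = last x p & {subset x :: t <= S}].
Proof.
elim: p x => [|v p IH] x xS /=.
  move=> _; exists [::]; split => //.
    split => // d [|i] [|j] //=; by rewrite eirr.
  by move=> z; rewrite inE => /eqP ->.
case/andP => /and3P [exv _ vS] pv.
have [t [IPt lt St]] := IH v vS pv.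
set s := v :: t.
case: (boolP (x \in s)) => xs.
  set k := index x s.
  have ks : k < size s by rewrite index_mem.
  have := drop_nth x ks; rewrite nth_index // => ds.
  exists (drop k.+1 s); split.
  - by rewrite -ds; apply: IP_drop.
  - have := last_drop_ne x ks; rewrite ds /= => ->; exact: lt.
  by move=> z; rewrite -ds => /mem_drop; apply: St.
have exP : exists i, (i < size s) && e x (nth x s i) by exists 0.
have ubP : forall i, (i < size s) && e x (nth x s i) -> i <= size s.
  by move=> i /andP[/ltnW].
case: (ex_maxnP exP ubP) => i /andP [iSz exi] imax.
have := drop_nth x iSz => ds.
exists (drop i s); split.
- apply: IP_cons; first exact: IP_drop.
  + by apply: contra xs; apply: mem_drop.
  move=> d k; rewrite size_drop nth_drop => ks.
  have iks : i + k < size s by rewrite -ltn_subRL.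
  rewrite (set_nth_default x) //.
  case: k ks iks => [|k] ks iks; first by rewrite addn0 exi.
  apply/negP => exk; have := imax (i + k.+1); rewrite iks exk => /(_ isT).
  by rewrite addnS ltnNge leq_addr.
- by rewrite last_drop_ne.
move=> z; rewrite inE => /orP [/eqP -> //|/mem_drop]; exact: St.
Qed.

Lemma conn_IP (S : {set 'I_n}) x y : induced_connected e S -> x \in S -> y \in S ->
  exists T : {set 'I_n}, [/\ T \subset S, x \in T, y \in T, T != finset.set0 &
    induced_is_path e T].
Proof.
case=> _ Hc xS yS.
case/connectP: (Hc x y xS yS) => p pp ->.
have [t [[ut Ht] lt St]] := walk_IP xS pp.
exists [set z in x :: t]; split.
- by apply/fintype.subsetP => z; rewrite inE; apply: St.
- by rewrite inE mem_head.
- by rewrite inE -lt mem_last.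
- by apply/set0Pn; exists x; rewrite inE mem_head.
have cT : #|[set z in x :: t]| = size (x :: t) by rewrite cardsE; apply/card_uniqP.
exists (fun i : 'I_#|[set z in x :: t]| => nth x (x :: t) i); split.
- move=> i j /eqP; rewrite nth_uniq -?cT ?ltn_ord // => /eqP; exact: val_inj.
- by move=> i; rewrite inE mem_nth // -cT ltn_ord.
by move=> i j; rewrite Ht // -cT ltn_ord.
Qed.

Lemma IP_conn (S : {set 'I_n}) : S != finset.set0 -> induced_is_path e S ->
  induced_connected e S.
Proof.
move=> S0 [f [finj fS fe]]; split => //.
have onto : forall x, x \in S -> exists i, x = f i.
  have : f @: [set: 'I_#|S|] = S.
    apply/eqP; rewrite eqEcard card_imset // cardsT card_ord leqnn andbT.
    by apply/fintype.subsetP => z /imsetP [i _ ->].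
  move=> fS' x xS; have : x \in f @: [set: 'I_#|S|] by rewrite fS'.
  by case/imsetP => i _ ->; exists i.
have symr : symmetric (induced_rel e S).
  move=> a b; rewrite /induced_rel esym.
  by case: (a \in S); case: (b \in S); rewrite ?andbF ?andbT.
have step : forall k (i j : 'I_#|S|), i + k = j -> connect (induced_rel e S) (f i) (f j).
  elim=> [|k IHk] i j.
    by rewrite addn0 => /val_inj ->; apply: connect0.
  move=> ij.
  have lt : i + k < #|S| by have := ltn_ord j; rewrite -ij; lia.
  apply: (connect_trans (IHk i (Ordinal lt) erefl)); apply: connect1.
  by rewrite /induced_rel !fS fe /path_graph_rel /= -ij addnS eqxx.
move=> x y /onto [i ->] /onto [j ->].
case: (leqP i j) => ij.
  by apply: (step (j - i)); rewrite subnKC.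
rewrite (sym_connect_sym symr); apply: (step (i - j)).
by rewrite subnKC // ltnW.
Qed.
End Comb.

Import Order.TTheory GRing.Theory Num.Theory.
Local Open Scope classical_set_scope.
Local Open Scope ring_scope.

Section Gen.
Variables (R : realType) (n : nat).
Implicit Types (fam : pred {set 'I_n}) (F : {set 'I_n} -> set 'rV[R]_n).

Lemma msum_seq (r : seq {set 'I_n}) fam F x : uniq r ->
  (\big[@minkowski_add R n/[set 0]]_(S <- r | fam S) F S) x <->
  exists g : {set 'I_n} -> 'rV[R]_n,
    (forall S, S \in r -> fam S -> F S (g S)) /\ x = \sum_(S <- r | fam S) g S.
Proof.
elim: r x => [|S0 r IH] x.
  move=> _; rewrite !big_nil; split.
    move=> Hx; exists (fun _ => 0); split => //; by rewrite big_nil.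
  by case=> g [_ ->]; rewrite big_nil.
move=> /= /andP[S0r ur]; rewrite !big_cons.
case: ifP => fS0.
  split.
    case=> a [b [Fa Hb ->]].
    have [g [Hg ->]] := (IH b ur).1 Hb.
    exists (fun S => if S == S0 then a else g S); split.
      move=> S; rewrite inE; case: eqP => [-> //|_ /= Sr fS]; exact: Hg.
    rewrite big_cons fS0 eqxx; congr (_ + _); rewrite big_seq_cond [RHS]big_seq_cond; apply: eq_bigr => S /andP[Sr _].
    by case: eqP => // eS; move: S0r; rewrite -eS Sr.
  case=> g [Hg ->]; exists (g S0), (\sum_(S <- r | fam S) g S); split => //; last by rewrite big_cons fS0.
    by apply: Hg => //; rewrite inE eqxx.
  by apply/(IH _ ur); exists g; split => // S Sr; apply: Hg; rewrite inE Sr orbT.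
rewrite (IH x ur); split; case=> g [Hg ->]; exists g; (split; last by rewrite big_cons fS0) => S.
  rewrite inE; case: eqP => [-> _|_ /= Sr]; [by rewrite fS0|exact: Hg].
by move=> Sr; apply: Hg; rewrite inE Sr orbT.
Qed.

Lemma msumP fam F x : minkowski_sum fam F x <->
  exists g : {set 'I_n} -> 'rV[R]_n,
    (forall S, fam S -> F S (g S)) /\ x = \sum_(S | fam S) g S.
Proof.
rewrite /minkowski_sum msum_seq ?index_enum_uniq //; split; case=> g [Hg ->];
  exists g; split => // S; [apply: Hg; exact: mem_index_enum|by move=> _; apply: Hg].
Qed.

Lemma dotvD (w x y : 'rV[R]_n) : dotv w (x + y) = dotv w x + dotv w y.
Proof. by rewrite /dotv -big_split; apply: eq_bigr => i _; rewrite mxE mulrDr. Qed.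

Lemma dotv0 (w : 'rV[R]_n) : dotv w 0 = 0.
Proof. by rewrite /dotv big1 // => i _; rewrite mxE mulr0. Qed.

Lemma dotv_sum (w : 'rV[R]_n) (P : pred {set 'I_n}) g :
  dotv w (\sum_(S | P S) g S) = \sum_(S | P S) dotv w (g S).
Proof. exact: (big_morph _ (dotvD w) (dotv0 w)). Qed.

Definition upd (g : {set 'I_n} -> 'rV[R]_n) S0 z := fun S => if S == S0 then z else g S.

Lemma repl (w : 'rV[R]_n) fam g S0 z : fam S0 ->
  dotv w (\sum_(S | fam S) upd g S0 z S) =
  dotv w (\sum_(S | fam S) g S) - dotv w (g S0) + dotv w z.
Proof.
move=> fS0; rewrite (bigD1 S0) //= [in RHS](bigD1 S0) //= /upd eqxx !dotvD.
rewrite (eq_bigr g); first by ring.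
by move=> S /andP[_ /negbTE ->].
Qed.

Section Fam.
Variables (fam : pred {set 'I_n}) (F : {set 'I_n} -> set 'rV[R]_n).
Let P := minkowski_sum fam F.

Lemma face_component (w : 'rV[R]_n) g : (forall S, fam S -> F S (g S)) ->
  face_of P w (\sum_(S | fam S) g S) ->
  forall S0, fam S0 -> face_of (F S0) w (g S0).
Proof.
move=> Hg [_ Hmax] S0 fS0; split; first exact: Hg.
move=> z Fz.
have : P (\sum_(S | fam S) upd g S0 z S).
  apply/msumP; exists (upd g S0 z); split => // S fS; rewrite /upd.
  by case: eqP => [->|]; [|move=> _; apply: Hg].
move/Hmax; rewrite repl //.
lra.
Qed.

Lemma face_sum (w : 'rV[R]_n) g : (forall S, fam S -> face_of (F S) w (g S)) ->
  face_of P w (\sum_(S | fam S) g S).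
Proof.
move=> Hg; split.
  by apply/msumP; exists g; split => // S /Hg [].
move=> y /msumP [h [Hh ->]]; rewrite !dotv_sum; apply: ler_sum => S fS.
by have [_ H] := Hg S fS; apply: H; apply: Hh.
Qed.

Lemma face_sub_iff (w w' : 'rV[R]_n) :
  (forall S v, fam S -> exists y, face_of (F S) v y) ->
  (face_of P w `<=` face_of P w') <->
  (forall S, fam S -> face_of (F S) w `<=` face_of (F S) w').
Proof.
move=> Hne; split.
  move=> Hsub S0 fS0 y Hy.
  have : forall S, exists z, fam S -> face_of (F S) w z.
    move=> S; case: (boolP (fam S)) => fS.
      by have [z Hz] := Hne S w fS; exists z.
    by exists 0.
  case/choice => g0 Hg0.
  pose g := upd g0 S0 y.
  have Hg : forall S, fam S -> face_of (F S) w (g S).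
    by move=> S fS; rewrite /g /upd; case: eqP => [->|_]; [|apply: Hg0].
  have := face_component (w := w') (g := g) _ (Hsub _ (face_sum Hg)) fS0.
  rewrite /g /upd eqxx; apply.
  by move=> S /Hg [].
move=> H x [/msumP [g [Hg ->]]] Hx.
apply: face_sum => S fS; apply: H => //.
apply: (face_component Hg) => //; split => //; by apply/msumP; exists g; split.
Qed.
End Fam.
End Gen.
Section Simp.
Variables (R : realType) (n : nat).

Lemma argmax_ex (S : {set 'I_n}) (f : 'I_n -> R) : S != finset.set0 ->
  exists2 a, a \in S & forall t, t \in S -> f t <= f a.
Proof.
case/set0Pn => i0 Si0.
case: (@arg_maxP _ _ _ i0 (mem S) f Si0) => a Sa Ha; exists a => //.
Qed.

Definition Ev (s : 'I_n) : 'rV[R]_n := delta_mx 0 s.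

Lemma simplexP (S : {set 'I_n}) (y : 'rV[R]_n) : simplex S y ->
  [/\ forall i, 0 <= y 0 i, forall i, i \notin S -> y 0 i = 0 & \sum_i y 0 i = 1].
Proof.
case=> lam [H0 Hout H1 ->].
have co : forall i, (\sum_(s in S) lam s *: (delta_mx 0 s : 'rV[R]_n)) 0 i = lam i.
  move=> i; rewrite summxE big_mkcond /= (bigD1 i) //= big1 => [|j ji].
    rewrite addr0; case: ifP => [_|/negbT /Hout -> //].
    by rewrite !mxE !eqxx /= mulr1.
  by case: ifP => // _; rewrite !mxE eq_sym (negbTE ji) andbF /= mulr0.
split.
- by move=> i; rewrite co.
- by move=> i /Hout; rewrite co.
rewrite (eq_bigr lam) ?[in RHS]big_mkcond -?H1; last by move=> i _; rewrite co.
rewrite [RHS]big_mkcond; apply: eq_bigr => i _; case: ifP => // /negbT /Hout //.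
Qed.

Lemma Ev_simplex (S : {set 'I_n}) s : s \in S -> simplex S (Ev s).
Proof.
move=> Ss; exists (fun t => (t == s)%:R); split.
- by move=> t; rewrite ler0n.
- by move=> t tS; case: eqP => // ts; rewrite ts Ss in tS.
- by rewrite (bigD1 s) //= eqxx big1 ?addr0 // => j /andP[_ /negbTE ->].
rewrite (bigD1 s) //= eqxx scale1r big1 ?addr0 // => j /andP[_ /negbTE ->].
by rewrite scale0r.
Qed.

Lemma dotv_Ev (w : 'rV[R]_n) s : dotv w (Ev s) = w 0 s.
Proof.
rewrite /dotv (bigD1 s) //= big1 ?addr0 => [|j js]; first by rewrite /Ev mxE !eqxx mulr1.
by rewrite /Ev mxE (negbTE js) andbF /= mulr0.
Qed.

Lemma dot_le (S : {set 'I_n}) (w : 'rV[R]_n) m z :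
  (forall t, t \in S -> w 0 t <= m) -> simplex S z -> dotv w z <= m.
Proof.
move=> Hm /simplexP [H0 Hout H1].
apply: (@le_trans _ _ (\sum_i m * z 0 i)).
  apply: ler_sum => i _; case: (boolP (i \in S)) => iS.
    by apply: ler_wpM2r => //; apply: Hm.
  by rewrite Hout // !mulr0.
by rewrite -mulr_sumr H1 mulr1.
Qed.

Lemma Ev_face (S : {set 'I_n}) (w : 'rV[R]_n) a :
  a \in S -> (forall t, t \in S -> w 0 t <= w 0 a) -> face_of (simplex S) w (Ev a).
Proof.
move=> Sa Ha; split; first exact: Ev_simplex.
by move=> z Hz; rewrite dotv_Ev; apply: (dot_le Ha).
Qed.

Definition AMsub (S : {set 'I_n}) (w w' : 'rV[R]_n) :=
  forall s, s \in S -> (forall t, t \in S -> w 0 t <= w 0 s) ->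
  forall t, t \in S -> w' 0 t <= w' 0 s.

Lemma simplex_face_iff (S : {set 'I_n}) (w w' : 'rV[R]_n) : S != finset.set0 ->
  (face_of (simplex S) w `<=` face_of (simplex S) w') <-> AMsub S w w'.
Proof.
move=> S0; split.
  move=> Hsub s Ss Hs t St.
  have [_ H] := Hsub _ (Ev_face Ss Hs).
  by have := H _ (Ev_simplex St); rewrite !dotv_Ev.
move=> HA y [Sy Hy]; split => // z Sz.
have [a Sa Ha] := argmax_ex (fun i => w 0 i) S0.
have [b Sb Hb] := argmax_ex (fun i => w' 0 i) S0.
have [H0 Hout H1] := simplexP Sy.
have key : forall i, 0 < y 0 i -> i \in S /\ forall t, t \in S -> w 0 t <= w 0 i.
  have hge : forall i, 0 <= (w 0 a - w 0 i) * y 0 i.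
    move=> i; case: (boolP (i \in S)) => iS.
      by apply: mulr_ge0 => //; rewrite subr_ge0; apply: Ha.
    by rewrite Hout // mulr0.
  have hsum : \sum_i (w 0 a - w 0 i) * y 0 i = 0.
    apply/eqP; rewrite eq_le sumr_ge0 ?andbT; last by move=> i _.
    under eq_bigr do rewrite mulrBl.
    rewrite sumrB -mulr_sumr H1 mulr1 subr_le0.
    by have := Hy _ (Ev_simplex Sa); rewrite dotv_Ev.
  have := psumr_eq0P (fun i _ => hge i) hsum => Hz i yi.
  have iS : i \in S.
    by apply/negPn/negP => /Hout yi0; rewrite yi0 ltxx in yi.
  split => // t tS; have := Hz i isT; move/eqP; rewrite mulf_eq0 (gt_eqF yi) orbF.
  rewrite subr_eq0 => /eqP <-; exact: Ha.
apply: (@le_trans _ _ (w' 0 b)); first exact: dot_le Hb Sz.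
apply: (@le_trans _ _ (\sum_i w' 0 b * y 0 i)); first by rewrite -mulr_sumr H1 mulr1.
apply: ler_sum => i _.
have := H0 i; rewrite le0r => /orP [/eqP ->|yi]; first by rewrite !mulr0.
have [iS Hi] := key i yi.
by apply: ler_wpM2r; [exact: ltW|apply: (HA i iS Hi)].
Qed.
End Simp.

Lemma fam_face (R : realType) (n : nat) (fam : pred {set 'I_n})
  (Hfam : forall S, fam S -> S != finset.set0) (w w' : 'rV[R]_n) :
  (face_of (minkowski_sum fam (@simplex R n)) w `<=`
   face_of (minkowski_sum fam (@simplex R n)) w') <->
  (forall S, fam S -> AMsub S w w').
Proof.
rewrite face_sub_iff; last first.
  move=> S v /Hfam S0; have [a Sa Ha] := argmax_ex (fun i => v 0 i) S0.
  by exists (Ev R a); apply: Ev_face.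
split=> H S fS; [apply/simplex_face_iff|apply/(simplex_face_iff _ _ (Hfam S fS))];
  by [apply: Hfam|apply: H].
Qed.

Theorem mainTheorem7 (R : realType) (n : nat) (e : rel 'I_n) :
  simple_graph e -> graph_connected e ->
  normally_equivalent (@Q_conn R n e) (@Q_path R n e).
Proof.
move=> [esym eirr] _.
have key : forall w w' : 'rV[R]_n,
    (face_of (@Q_conn R n e) w `<=` face_of (@Q_conn R n e) w') <->
    (face_of (@Q_path R n e) w `<=` face_of (@Q_path R n e) w').
  move=> w w'; rewrite /Q_conn /Q_path !fam_face; last 2 first.
  - by move=> S /andP[].
  - by move=> S /asboolP [].
  split=> H S.
    case/andP => S0 /asboolP Sp; apply: H; apply/asboolP; exact: IP_conn.
  move/asboolP => Sc s sS Hs t tS.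
  have [T [/fintype.subsetP TS sT tT T0 Tp]] := conn_IP esym eirr Sc sS tS.
  apply: (H T) => //; first by rewrite T0; apply/asboolP.
  by move=> u uT; apply: Hs; apply: TS.
rewrite /normally_equivalent /normal_fan; apply: funext => C; apply: propext.
split; case=> w ->; exists w; apply: funext => v; apply: propext;
  rewrite /normal_cone /=; [exact: (key w v) | exact: (iff_sym (key w v))].
Qed.
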